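(* Let $p=0$, $\alpha\in[0,1]$, $0\le h_1<\dots<h_N\le1$, and nonnegative weights $f_0^S(h_j),f_0^{NS}(h_j)$, $j=1,\dots,N$, each summing to $1$; set $f_0(h_j)=\alpha f_0^S(h_j)+(1-\alpha)f_0^{NS}(h_j)$ and assume $f_0(h_N)>0$; write $f_0([h_i,1])=\sum_{j\ge i}f_0(h_j)$, $f_0^S([h_i,1])=\sum_{j\ge i}f_0^S(h_j)$, $f_0^{NS}([h_i,1])=\sum_{j\ge i}f_0^{NS}(h_j)$. Let $m_0^{S,j}\in[-1,1]$ be given. Let $f^{NS,1},\dots,f^{NS,N}\in C([0,+\infty),P([-1,1]))$ (weak topology) with initial data $f_0^{NS,i}$, write $m^{NS,j}(t)=\int_{-1}^1w\,f^{NS,j}(t,dw)$, $$\beta_i(t)=\alpha\sum_{j\ge i}f_0^S(h_j)m_0^{S,j}+(1-\alpha)\sum_{j\ge i}f_0^{NS}(h_j)m^{NS,j}(t),$$ and assume that for all $i$, $t\ge0$ and $\phi\in C^1([-1,1])$, $$\int\phi\,df^{NS,i}(t)=\int\phi\,df_0^{NS,i}+\int_0^t\!\!\int_{-1}^1\phi'(w)\big(\beta_i(s)-f_0([h_i,1])w\big)f^{NS,i}(s,dw)\,ds.$$ Define $$m_\infty^{NS,N}=\begin{cases}\int_{-1}^1w\,f_0^{NS,N}(dw)&\text{if }\alpha f_0^S(h_N)=0,\\ m_0^{S,N}&\text{if }\alpha f_0^S(h_N)>0,\end{cases}$$ and recursively for $i=N-1,\dots,1$, $$m_\infty^{NS,i}=\frac{(1-\alpha)\sum_{j\ge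 i+1}f_0^{NS}(h_j)m_\infty^{NS,j}+\alpha\sum_{j\ge i}f_0^S(h_j)m_0^{S,j}}{\alpha f_0^S([h_i,1])+(1-\alpha)f_0^{NS}([h_{i+1},1])}.$$ Then $f^{NS,i}(t)\to\delta_{m_\infty^{NS,i}}$ weakly as $t\to+\infty$ for every $i=1,\dots,N$. In particular, if $\alpha f_0^S(h_i)=0$ for all $i=1,\dots,N-1$ (no stubborn individuals at levels $h_1,\dots,h_{N-1}$), then $m_\infty^{NS,i}=m_\infty^{NS,N}$ for $i=1,\dots,N-1$.
   Context: $P([-1,1])$ is the set of Borel probability measures on $[-1,1]$; $\delta_x$ is the Dirac mass at $x$. Interpretation: $f^{NS,i}(t)$ is the opinion distribution of non-stubborn individuals at hierarchy level $h_i$, $\alpha f_0^S(h_j)$ (resp. $(1-\alpha)f_0^{NS}(h_j)$) the proportion of stubborn (resp. non-stubborn) individuals at level $h_j$, $m_0^{S,j}$ the mean opinion of stubborn individuals at level $h_j$. The case $p=0$ means hierarchy is strictly respected. *)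

(* Defs.v *)
From HB Require Import structures.
From mathcomp Require Import all_boot all_order all_algebra.
From mathcomp Require Import all_classical all_reals all_analysis.
Set Implicit Arguments. Unset Strict Implicit. Unset Printing Implicit Defensive.
Import Order.TTheory GRing.Theory Num.Theory.
Import numFieldNormedType.Exports.
Local Open Scope classical_set_scope.
Local Open Scope ring_scope.

Section Defs.
Variable R : realType.

(* Elements of P([-1,1]) are represented by probability measures on R
   giving full mass to [-1,1]. *)
Definition supported_in_I (mu : probability R R) : Prop :=
  mu `[-1, 1]%classic = 1%E.

Definition integI (mu : probability R R) (phi : R -> R) : R :=
  Rintegral mu `[-1, 1]%classic phi.

(* C^1 test functions (restrictions of C^1(R) functions to [-1,1]) *)
Definition C1fun (phi : R -> R) : Prop :=
  (forall x, derivable phi x 1) /\ continuous (derive1 phi).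

Definition CIfun (phi : R -> R) : Prop := {within `[-1, 1]%classic, continuous phi}.

Variable n : nat. (* N = n.+1 hierarchy levels, indexed by 'I_n.+1 *)

Definition tail (g : 'I_n.+1 -> R) (i : 'I_n.+1) : R :=
  \sum_(j < n.+1 | (i <= j)%N) g j.

Definition stail (g : 'I_n.+1 -> R) (i : 'I_n.+1) : R :=
  \sum_(j < n.+1 | (i < j)%N) g j.

Variables (alpha : R) (fS fNS : 'I_n.+1 -> R) (mS : 'I_n.+1 -> R) (mN0 : R).

Definition minf_last : R :=
  if alpha * fS ord_max == 0 then mN0 else mS ord_max.

Definition minf_step (prev : 'I_n.+1 -> R) (i : 'I_n.+1) : R :=
  if i == ord_max then minf_last
  else ((1 - alpha) * stail (fun j => fNS j * prev j) i
        + alpha * tail (fun j => fS j * mS j) i)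
       / (alpha * tail fS i + (1 - alpha) * stail fNS i).

(* m_infty^{NS,i}: the backward recursion i = N, N-1, ..., 1; after k
   iterations the values at the k top indices are the correct ones, so
   n.+1 iterations compute all of them. *)
Definition minf : 'I_n.+1 -> R := iter n.+1 minf_step (fun _ => 0).

End Defs.

(* Main.v *)
Require Import Defs.
From HB Require Import structures.
From mathcomp Require Import all_boot all_order all_algebra.
From mathcomp Require Import all_classical all_reals all_analysis.
From mathcomp Require Import ring lra measurable_realfun zify.
Import Order.TTheory GRing.Theory Num.Theory.
Import numFieldNormedType.Exports.
Local Open Scope classical_set_scope.
Local Open Scope ring_scope.
Section P.
Context {R : realType}.
Implicit Types (mu : probability R R) (phi f g : R -> R) (a b c k : R).

Lemma mI : measurable (`[-1, 1]%classic : set R).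
Proof. exact: measurable_itv. Qed.

Lemma integI_int mu phi : CIfun phi -> mu.-integrable `[-1, 1] (EFin \o phi).
Proof.
move=> cphi; apply: measurable_bounded_integrable.
- exact: mI.
- by apply: (le_lt_trans (probability_le1 _ mI)); exact: ltry.
- by apply: subspace_continuous_measurable_fun => //; exact: mI.
- have /compact_bounded[M [_ mrt]] := continuous_compact cphi (@segment_compact R (-1) 1).
  by exists M; split; rewrite ?num_real // => ? ? ? ?; exact: mrt.
Qed.

Lemma CIfun_cont {phi : R -> R} : continuous phi -> CIfun phi.
Proof. by move=> c; apply: continuous_subspaceT. Qed.

Lemma integI_ext mu f g : (forall w, f w = g w) -> integI mu f = integI mu g.
Proof. by move=> fg; congr integI; exact: funext. Qed.

Lemma integI_cst mu c : supported_in_I mu -> integI mu (fun _ => c) = c.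
Proof. move=> s; rewrite /integI Rintegral_cst ?mI //; rewrite [X in _ * X](_ : _ = 1) ?mulr1 //; exact: (congr1 fine s). Qed.

Lemma integID mu f g : CIfun f -> CIfun g ->
  integI mu (fun w => f w + g w) = integI mu f + integI mu g.
Proof. by move=> cf cg; rewrite /integI RintegralD ?mI //; exact: integI_int. Qed.

Lemma integIZ mu k f : CIfun f ->
  integI mu (fun w => k * f w) = k * integI mu f.
Proof. by move=> cf; rewrite /integI RintegralZl ?mI //; exact: integI_int. Qed.

Lemma cont_sq : continuous (fun w : R => w ^+ 2).
Proof. by move=> w; apply: continuousM; exact: cvg_id. Qed.

Lemma contMc k {f : R -> R} : continuous f -> continuous (fun w => k * f w).
Proof. by move=> cf w; apply: (@continuousM _ _ (cst k) f); [exact: cst_continuous|exact: cf]. Qed.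

Lemma contD {f g : R -> R} : continuous f -> continuous g -> continuous (fun w => f w + g w).
Proof. by move=> cf cg w; apply: (@continuousD _ _ _ f g); [exact: cf|exact: cg]. Qed.


Lemma integI_quad mu a b c : supported_in_I mu ->
  integI mu (fun w => a + b * w + c * w ^+ 2) =
  a + b * integI mu id + c * integI mu (fun w => w ^+ 2).
Proof.
move=> s.
have cid : continuous (@id R) by move=> x; exact: cvg_id.
rewrite integID; last exact: CIfun_cont (contMc c cont_sq).
  rewrite integID; [|by apply: CIfun_cont => w; exact: cvg_cst|].
    by rewrite integI_cst // !integIZ //; [exact: CIfun_cont cont_sq | exact: CIfun_cont cid].
  exact: CIfun_cont (contMc b cid).
apply: CIfun_cont; apply: contD; [by move=> w; exact: cvg_cst|exact: (contMc b cid)].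
Qed.


Lemma cid : continuous (@id R).
Proof. by move=> x; exact: cvg_id. Qed.

Lemma C1_id : C1fun (@id R).
Proof.
split; first by move=> x; exact: derivable_id.
rewrite (_ : derive1 id = cst 1); first exact: cst_continuous.
by apply/funext => x; exact: derive1_id.
Qed.

Lemma d_sq (x : R) : (fun w : R => w ^+ 2)^`()%classic x = 2 * x.
Proof. by rewrite exp_derive1 expr1. Qed.

Lemma C1_sq : C1fun (fun w : R => w ^+ 2).
Proof.
split; first by move=> x; exact: exprn_derivable.
rewrite (_ : derive1 _ = fun w => 2 * w); first exact: (contMc 2 cid).
by apply/funext => x; exact: d_sq.
Qed.

Lemma cvg_bigsum {T : Type} (F : set_system T) {FF : Filter F} (I : Type)
  (r : seq I) (P : pred I) (u : I -> T -> R) (l : I -> R) :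
  (forall j, P j -> u j t @[t --> F] --> l j) ->
  (\sum_(j <- r | P j) u j t) @[t --> F] --> \sum_(j <- r | P j) l j.
Proof.
move=> H; elim: r => [|x r IH].
  rewrite big_nil; under eq_fun do rewrite big_nil; exact: cvg_cst.
rewrite big_cons; under eq_fun do rewrite big_cons.
case: ifP => Px; last exact: IH.
by apply: cvgD => //; exact: H.
Qed.

End P.

Section Q.
Context {R : realType} {n : nat}.
Implicit Types (u : 'I_n.+1 -> R) (i j : 'I_n.+1).

Lemma tail_split u i : tail u i = u i + stail u i.
Proof.
rewrite /tail /stail (bigD1 i) //=; congr (_ + _).
by apply: eq_bigl => j; rewrite ltn_neqAle andbC eq_sym.
Qed.

Variables (a : R) (fS fNS mS : 'I_n.+1 -> R) (m0 : R).

Lemma step_ext (p q : 'I_n.+1 -> R) i :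
  (forall j, (i < j)%N -> p j = q j) ->
  minf_step a fS fNS mS m0 p i = minf_step a fS fNS mS m0 q i.
Proof.
move=> pq; rewrite /minf_step; case: ifP => // _.
by congr (((1 - a) * _ + _) / _); apply: eq_bigr => j ij; rewrite pq.
Qed.

Lemma minf_fix i :
  minf a fS fNS mS m0 i = minf_step a fS fNS mS m0 (minf a fS fNS mS m0) i.
Proof.
pose S k := iter k (minf_step a fS fNS mS m0) (fun _ => 0).
have claim : forall k i, (n - i < k)%N -> S k.+1 i = S k i.
  elim=> [//|k IH] i' ik.
  rewrite /S !iterS; apply: step_ext => j ij.
  apply: IH.
  have := ltn_ord j; have := ltn_ord i'; lia.
have H : (n - i < n.+1)%N by have := ltn_ord i; lia.
symmetry; exact: (claim n.+1 i H).
Qed.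
End Q.

Section S.
Context {R : realType}.
Notation mu := (@lebesgue_measure R).
Lemma ode_deriv (x g : R -> R) (D : R) :
  {within `[0, +oo[, continuous x} ->
  {within `[0, +oo[, continuous g} ->
  let h := fun s => g s - D * x s in
  let X := fun t => x 0 + \int[mu]_(s in `[0, t]) h s in
  forall t : R, 0 < t -> is_derive t 1 X (h t).
Proof.
move=> cx cg h X t t0.
have hc : {within `[0, +oo[, continuous h}.
  move=> y; rewrite /h.
  apply: cvgB; first exact: cg.
  by apply: cvgM; [exact: cvg_cst|exact: cx].
have hint : mu.-integrable `[0, t + 1] (EFin \o h).
  apply: continuous_compact_integrable; first exact: segment_compact.
  apply: continuous_subspaceW hc.
  by move=> y; rewrite /= !in_itv /= => /andP[-> _].
have hct : {for t, continuous h}.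
  have : {within `]0, +oo[, continuous h}.
    apply: continuous_subspaceW hc.
    by move=> y; rewrite /= !in_itv /= !andbT; exact: ltW.
  rewrite continuous_open_subspace; last exact: interval_open.
  by apply; rewrite inE /= in_itv /= t0.
have := @continuous_FTC1_closed R h 0 t (t+1) _ hint t0 hct.
move=> /(_ _) [|dF F']; first by rewrite ltrDl.
have dF' : is_derive t 1 (fun x => \int[mu]_(t in `[0, x]) h t) (h t).
  by rewrite -F' derive1E; exact: derivableP.
rewrite -[h t]add0r.
have H := is_deriveD (is_derive_cst (x 0) t 1) dF'.
rewrite /X; exact H.
Qed.
Lemma dexpD (D s : R) : is_derive s 1 (fun s => expR (D * s)) (expR (D * s) * D).
Proof.
have hD : is_derive s 1 (fun s : R => D * s) D.
  have H : is_derive s 1 (D \*: id) (D *: (1:R)) := is_deriveZ D (is_derive_id s 1).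
  exact: (@trigger_derive R (fun s => D * s) s (D *: 1) D H (mulr1 D)).
exact: (is_derive1_comp (f := expR) (g := fun s => D * s)).
Qed.
Lemma dprod (D s a : R) (z : R -> R) : is_derive s 1 z a ->
  is_derive s 1 (fun s => expR (D * s) * z s) (expR (D * s) * (D * z s + a)).
Proof.
move=> za.
have := is_deriveM (dexpD D s) za.
move=> H; apply: (@trigger_derive R (fun s => expR (D*s) * z s) s _ _ H).
rewrite /GRing.scale /=. ring.
Qed.
Lemma mono_helper (f df : R -> R) (T t : R) : 0 < T -> T <= t ->
  (forall s : R, 0 < s -> is_derive s 1 f (df s)) ->
  (forall s : R, T < s -> 0 <= df s) -> f T <= f t.
Proof.
move=> T0 Tt fd dpos.
have cf : {within `[T, t], continuous f}.
  apply: continuous_in_subspaceT => s; rewrite inE /= in_itv /= => /andP[Ts _].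
  have [fs _] := fd s (lt_le_trans T0 Ts).
  exact/differentiable_continuous/derivable1_diffP.
apply: (ger0_derive1_le_cc (a := T) (b := t)) => //.
- move=> s; rewrite in_itv /= => /andP[Ts _].
  by have [] := fd s (lt_trans T0 Ts).
- move=> s; rewrite in_itv /= => /andP[Ts _].
  have fds := fd s (lt_trans T0 Ts).
  by rewrite derive1E derive_val; exact: dpos.
- by rewrite in_itv /= lexx Tt.
- by rewrite in_itv /= lexx Tt.
Qed.

Lemma ode_cvg (x g : R -> R) (D L : R) :
  0 < D ->
  {within `[0, +oo[, continuous x} ->
  {within `[0, +oo[, continuous g} ->
  (forall t : R, 0 <= t -> x t = x 0 + \int[mu]_(s in `[0, t]) (g s - D * x s)) ->
  g t @[t --> +oo] --> L ->
  x t @[t --> +oo] --> L / D.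
Proof.
move=> D0 cx cg xE gL.
pose X := fun t => x 0 + \int[mu]_(s in `[0, t]) (g s - D * x s).
have dX : forall t : R, 0 < t -> is_derive t 1 X (g t - D * x t) := ode_deriv x g D cx cg.
have XE : forall t : R, 0 <= t -> X t = x t by move=> t t0; rewrite /X -xE.
apply/cvgrPdist_le => e e0.
pose c := e / 4.
have c0 : 0 < c by rewrite divr_gt0.
have cD0 : 0 < c * D by rewrite mulr_gt0.
move/cvgrPdist_le : gL => /(_ (c * D) cD0) [M [Mreal HM]].
pose T := Num.max M 0 + 1.
have m0 : 0 <= Num.max M 0 by rewrite le_max lexx orbT.
have mM : M <= Num.max M 0 by rewrite le_max lexx.
have T0 : 0 < T by rewrite /T; lra.
have MT : M < T by rewrite /T; lra.
pose z := fun t => X t - L / D.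
have dz : forall s : R, 0 < s -> forall k, is_derive s 1 (fun s => z s + k) (g s - D * x s).
  move=> s s0 k.
  have H := is_deriveD (is_deriveB (dX s s0) (is_derive_cst (L / D) s 1)) (is_derive_cst k s 1).
  apply: (@trigger_derive R (fun s => z s + k) s _ _ H).
  by rewrite subr0 addr0.
have gb : forall s, T < s -> -(c * D) <= g s - L <= c * D.
  move=> s Ts; have := HM s (lt_trans MT Ts).
  rewrite ler_norml => /andP[h1 h2]; apply/andP; split; lra.
have up : forall t, T <= t -> expR (D * t) * (z t - c) <= expR (D * T) * (z T - c).
  move=> t Tt.
  have := @mono_helper (fun s => - (expR (D * s) * (z s + - c)))
     (fun s => - (expR (D * s) * (g s - L - c * D))) T t T0 Tt.
  rewrite lerN2; apply.
    move=> s s0; have H := is_deriveN (@dprod D s _ _ (dz s s0 (- c))).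
    apply: (@trigger_derive R (fun s => - (expR (D * s) * (z s + - c))) s _ _ H).
    rewrite /z XE ?ltW //; congr (- (_ * _)); field; exact: lt0r_neq0.
  move=> s Ts; rewrite oppr_ge0 pmulr_rle0 ?expR_gt0 //.
  by have /andP[_ h2] := gb s Ts; lra.
have down : forall t, T <= t -> expR (D * T) * (z T + c) <= expR (D * t) * (z t + c).
  move=> t Tt.
  apply: (@mono_helper (fun s => expR (D * s) * (z s + c))
     (fun s => expR (D * s) * (g s - L + c * D)) T t T0 Tt).
    move=> s s0; have H := @dprod D s _ _ (dz s s0 c).
    apply: (@trigger_derive R (fun s => expR (D * s) * (z s + c)) s _ _ H).
    rewrite /z XE ?ltW //; congr (_ * _); field; exact: lt0r_neq0.
  move=> s Ts; rewrite pmulr_rge0 ?expR_gt0 //.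
  by have /andP[h1 _] := gb s Ts; lra.
pose B := `|z T| + c.
exists (T + B / (c * D)); split; first exact: num_real.
move=> t Mt.
have B0 : 0 <= B by rewrite /B; have := normr_ge0 (z T); lra.
have BcD : 0 <= B / (c * D) by rewrite divr_ge0 // ltW.
have Tt : T <= t by lra.
have big : B < c * D * (t - T).
  by rewrite -ltr_pdivrMl //; lra.
have ET0 : 0 < expR (D * T) := expR_gt0 _.
have Et : expR (D * t) = expR (D * T) * expR (D * (t - T)).
  by rewrite -expRD; congr expR; ring.
have Eb : 1 + D * (t - T) <= expR (D * (t - T)) := expR_ge1Dx _.
have key : expR (D * T) * B <= expR (D * t) * c.
  rewrite Et -mulrA ler_pM2l //.
  have : B <= c * (1 + D * (t - T)) by nra.
  by move=> h; apply: (le_trans h); rewrite [X in _ <= X]mulrC ler_pM2l.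
have zT1 : z T - c <= B by rewrite /B; have := ler_norm (z T); lra.
have zT2 : - B <= z T + c by rewrite /B; have := ler_normr (z T); have := normrN (z T); have := ler_norm (- z T); lra.
have Et0 : 0 < expR (D * t) := expR_gt0 _.
have u1 := up t Tt; have d1 := down t Tt.
have h1 : expR (D * t) * (z t - 2 * c) <= 0.
  have : expR (D * T) * (z T - c) <= expR (D * T) * B by rewrite ler_pM2l.
  nra.
have h2 : 0 <= expR (D * t) * (z t + 2 * c).
  have : - (expR (D * T) * B) <= expR (D * T) * (z T + c).
    by rewrite -mulrN ler_pM2l.
  nra.
rewrite pmulr_rle0 // in h1; rewrite pmulr_rge0 // in h2.
rewrite -XE; last by lra.
have -> : L / D - X t = - z t by rewrite /z; ring.
have ce : 4 * c = e by rewrite /c; field.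
rewrite normrN ler_norml; apply/andP; split; lra.
Qed.
End S.

Section W.
Context {R : realType}.

Lemma integI_le (mu : probability R R) (f g : R -> R) : CIfun f -> CIfun g ->
  (forall w, -1 <= w <= 1 -> f w <= g w) -> integI mu f <= integI mu g.
Proof.
move=> cf cg fg; apply: le_Rintegral; [exact: mI|exact: integI_int|exact: integI_int|].
by move=> w; rewrite /= in_itv /= => /fg.
Qed.

Lemma weak_conv (mut : R -> probability R R) (ml : R) :
  (forall t, 0 <= t -> supported_in_I (mut t)) ->
  integI (mut t) id @[t --> +oo] --> ml ->
  integI (mut t) (fun w => w ^+ 2) @[t --> +oo] --> ml ^+ 2 ->
  forall phi, CIfun phi -> integI (mut t) phi @[t --> +oo] --> phi ml.
Proof.
move=> supp m1 m2 phi cphi.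
have cidI : CIfun (@id R) := CIfun_cont cid.
have mb : forall t, 0 <= t -> -1 <= integI (mut t) id <= 1.
  move=> t t0; apply/andP; split.
    rewrite -[X in X <= _](integI_cst _ (-1) (supp t t0)).
    apply: integI_le; [by apply: CIfun_cont => w; exact: cvg_cst|exact: cidI|].
    by move=> w /andP[].
  rewrite -[X in _ <= X](integI_cst _ 1 (supp t t0)).
  apply: integI_le; [exact: cidI|by apply: CIfun_cont => w; exact: cvg_cst|].
  by move=> w /andP[].
have mlI : -1 <= ml <= 1.
  apply/andP; split.
    apply: (cvgr_to_ge m1); exists 0; split; first exact: num_real.
    by move=> t /ltW /mb /andP[].
  apply: (cvgr_to_le m1); exists 0; split; first exact: num_real.
  by move=> t /ltW /mb /andP[].
have /compact_bounded[M [_ mrt]] := continuous_compact cphi (@segment_compact R (-1) 1).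
pose K0 := `|M| + 1.
have K00 : 0 < K0 by rewrite /K0; have := normr_ge0 M; lra.
have Kb : forall y, -1 <= y <= 1 -> `|phi y| <= K0.
  move=> y yI; apply: (mrt K0).
    by rewrite /K0; have := ler_norm M; lra.
  by exists y => //; rewrite /= in_itv.
apply/cvgrPdist_le => e e0.
have e20 : 0 < e / 2 by rewrite divr_gt0.
have mlI' : `[-1, 1]%classic ml by rewrite /= in_itv.
have := cphi; move/subspace_continuousP => /(_ ml mlI').
move/cvgrPdist_lt => /(_ _ e20) /nbhs_normP [d d0 Hd].
have near_b : forall w, -1 <= w <= 1 -> `|ml - w| < d -> `|phi ml - phi w| < e/2.
  by move=> w wI wd; apply: (Hd w) => //=.
pose Kc := 2 * K0 / d ^+ 2.
have Kc0 : 0 <= Kc by rewrite /Kc divr_ge0 // ?exprn_ge0 // ltW // mulr_gt0.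
have KcE : Kc * d ^+ 2 = 2 * K0 by rewrite /Kc; field; rewrite ?expf_neq0 // lt0r_neq0.
have pb : forall w, -1 <= w <= 1 -> `|phi w - phi ml| <= e / 2 + Kc * (w - ml) ^+ 2.
  move=> w wI.
  have sq0 : 0 <= Kc * (w - ml) ^+ 2 by rewrite mulr_ge0 // sqr_ge0.
  case: (ltP `|ml - w| d) => h.
    by have := near_b w wI h; rewrite distrC; lra.
  have dd : d ^+ 2 <= (w - ml) ^+ 2.
    have E : `|ml - w| ^+ 2 = (w - ml) ^+ 2 by rewrite real_normK ?num_real //; ring.
    by rewrite -E !expr2; apply: ler_pM => //; exact: ltW.
  have : Kc * d ^+ 2 <= Kc * (w - ml) ^+ 2 by rewrite ler_wpM2l.
  have := ler_normB (phi w) (phi ml).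
  have := Kb w wI; have := Kb ml mlI.
  lra.
pose a := e / 2 + Kc * ml ^+ 2.
pose b := - (2 * Kc * ml).
have Lq : (fun t => a + b * integI (mut t) id + Kc * integI (mut t) (fun w => w ^+ 2))
    @ +oo --> a + b * ml + Kc * ml ^+ 2.
  apply: cvgD; first apply: cvgD; first exact: cvg_cst.
    by apply: cvgM; [exact: cvg_cst|exact: m1].
  by apply: cvgM; [exact: cvg_cst|exact: m2].
move/cvgrPdist_le : Lq => /(_ _ e20) [N [_ HN]].
exists (Num.max N 0); split; first exact: num_real.
move=> t; rewrite gt_max => /andP[Nt t0].
have st := supp t (ltW t0).
have := HN t Nt.
have -> : a + b * ml + Kc * ml ^+ 2 = e / 2 by rewrite /a /b; ring.
rewrite -integI_quad //.
move=> hq.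
have cd : CIfun (fun w => phi w + - phi ml).
  by move=> x; apply: cvgD; [exact: cphi|exact: cvg_cst].
have E1 : integI (mut t) phi - phi ml = integI (mut t) (fun w => phi w + - phi ml).
  rewrite integID //; last by move=> x; exact: cvg_cst.
  by rewrite integI_cst.
rewrite distrC E1.
have hn := le_normr_Rintegral mI (integI_int (mut t) _ cd).
apply: (le_trans hn).
apply: (@le_trans _ _ (integI (mut t) (fun w => a + b * w + Kc * w ^+ 2))).
  apply: integI_le.
  - by move=> x; apply: cvg_norm; exact: cd.
  - apply: CIfun_cont => x; apply: cvgD; first apply: cvgD; first exact: cvg_cst.
      by apply: cvgM; [exact: cvg_cst|exact: cvg_id].
    by apply: cvgM; [exact: cvg_cst|exact: cont_sq].
  move=> w wI; have := pb w wI; rewrite /a /b.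
  by move=> h; apply: (le_trans h); rewrite le_eqVlt; apply/orP; left; apply/eqP; ring.
have : integI (mut t) (fun w => a + b * w + Kc * w ^+ 2) <= e / 2 + e / 2.
  by move: hq; rewrite ler_norml => /andP[h1 h2]; lra.
lra.
Qed.
End W.

Section Main.
Context {R : realType} (n : nat) (alpha : R) (fS fNS mS : 'I_n.+1 -> R)
  (f0NS : 'I_n.+1 -> probability R R) (fNSt : 'I_n.+1 -> R -> probability R R).
Hypothesis Ha : 0 <= alpha <= 1.
Hypothesis HfS : forall j, 0 <= fS j.
Hypothesis HfNS : forall j, 0 <= fNS j.
Hypothesis Hpos : 0 < alpha * fS ord_max + (1 - alpha) * fNS ord_max.
Hypothesis Hsupp : forall i t, 0 <= t -> supported_in_I (fNSt i t).
Hypothesis H0 : forall i, fNSt i 0 = f0NS i.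
Hypothesis Hcont : forall i phi, CIfun phi ->
     {within `[0, +oo[%classic, continuous (fun t => integI (fNSt i t) phi)}.
Hypothesis Hweak :
  (let f0 := fun j => alpha * fS j + (1 - alpha) * fNS j in
   let mNS := fun j t => integI (fNSt j t) id in
   let beta := fun i t =>
     alpha * tail (fun j => fS j * mS j) i
     + (1 - alpha) * tail (fun j => fNS j * mNS j t) i in
   forall i t phi, 0 <= t -> C1fun phi ->
     integI (fNSt i t) phi =
     integI (f0NS i) phi
     + Rintegral lebesgue_measure `[0, t]%classic
         (fun s => integI (fNSt i s)
                     (fun w => derive1 phi w * (beta i s - tail f0 i * w)))).

Definition f0 j := alpha * fS j + (1 - alpha) * fNS j.
Definition m j t := integI (fNSt j t) id.
Definition M2 j t := integI (fNSt j t) (fun w => w ^+ 2).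
Definition beta i t := alpha * tail (fun j => fS j * mS j) i
  + (1 - alpha) * tail (fun j => fNS j * m j t) i.
Definition F i := tail f0 i.
Definition Dd i := alpha * tail fS i + (1 - alpha) * stail fNS i.
Definition gg i t := alpha * tail (fun j => fS j * mS j) i
  + (1 - alpha) * stail (fun j => fNS j * m j t) i.
Definition mi := minf alpha fS fNS mS (integI (f0NS ord_max) id).
Definition G i := alpha * tail (fun j => fS j * mS j) i
  + (1 - alpha) * stail (fun j => fNS j * mi j) i.

Lemma a0 : 0 <= alpha. Proof. by case/andP: Ha. Qed.
Lemma a1 : 0 <= 1 - alpha. Proof. by case/andP: Ha => _; rewrite subr_ge0. Qed.

Lemma f0_ge0 j : 0 <= f0 j.
Proof. by rewrite /f0 addr_ge0 // mulr_ge0 //; [exact: a0|exact: a1]. Qed.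

Lemma le_max_ord (i : 'I_n.+1) : (i <= @ord_max n)%N.
Proof. by rewrite /= -ltnS ltn_ord. Qed.

Lemma tail_ge_max (u : 'I_n.+1 -> R) i : (forall j, 0 <= u j) -> u ord_max <= tail u i.
Proof.
move=> u0; rewrite /tail (bigD1 ord_max) ?le_max_ord //= lerDl.
by apply: sumr_ge0 => j _; exact: u0.
Qed.

Lemma stail_ge_max (u : 'I_n.+1 -> R) i : (forall j, 0 <= u j) -> i != ord_max ->
  u ord_max <= stail u i.
Proof.
move=> u0 iN; rewrite /stail (bigD1 ord_max) /=; last first.
  by rewrite ltn_neqAle le_max_ord andbT; apply: contra iN => /eqP h; apply/eqP/val_inj.
by rewrite lerDl; apply: sumr_ge0 => j _; exact: u0.
Qed.

Lemma tail_ge0 (u : 'I_n.+1 -> R) i : (forall j, 0 <= u j) -> 0 <= tail u i.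
Proof. by move=> u0; apply: sumr_ge0 => j _; exact: u0. Qed.
Lemma stail_ge0 (u : 'I_n.+1 -> R) i : (forall j, 0 <= u j) -> 0 <= stail u i.
Proof. by move=> u0; apply: sumr_ge0 => j _; exact: u0. Qed.

Lemma F_gt0 i : 0 < F i.
Proof. by apply: (lt_le_trans Hpos); apply: tail_ge_max; exact: f0_ge0. Qed.

Lemma Dd_ge0 i : 0 <= Dd i.
Proof.
by rewrite /Dd addr_ge0 // mulr_ge0 ?a0 ?a1 ?tail_ge0 ?stail_ge0.
Qed.

Lemma Dd_gt0 i : i != ord_max -> 0 < Dd i.
Proof.
move=> iN; apply: (lt_le_trans Hpos); rewrite /Dd lerD //.
  by rewrite ler_wpM2l ?a0 // tail_ge_max.
by rewrite ler_wpM2l ?a1 // stail_ge_max.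
Qed.

Lemma FDd i : F i = Dd i + (1 - alpha) * fNS i.
Proof.
rewrite /F /Dd /tail /f0 big_split /= -!mulr_sumr.
rewrite -/(tail fNS i) tail_split; ring.
Qed.

Lemma beta_split i t : beta i t = gg i t + (1 - alpha) * fNS i * m i t.
Proof. rewrite /beta /gg (tail_split (fun j => fNS j * m j t)) /=; ring. Qed.


Lemma stail_max (u : 'I_n.+1 -> R) : stail u ord_max = 0.
Proof.
rewrite /stail big_pred0 // => j /=.
by apply/negbTE; rewrite -leqNgt -ltnS ltn_ord.
Qed.

Lemma tail_max (u : 'I_n.+1 -> R) : tail u ord_max = u ord_max.
Proof. by rewrite tail_split stail_max addr0. Qed.

Lemma DG i : Dd i * mi i = G i.
Proof.
rewrite /G /mi [X in _ * X]minf_fix /minf_step.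
have [->|iN] := eqVneq i ord_max.
  rewrite /minf_last /Dd !tail_max !stail_max.
  case: ifP => [/eqP h|_]; last by ring.
  by rewrite !mulr0 !addr0 h mul0r mulrA h mul0r.
rewrite -/(Dd i) mulrC -mulrA mulVf ?mulr1; last first.
  by rewrite lt0r_neq0 // Dd_gt0.
by rewrite addrC.
Qed.

Lemma m_eq i t : 0 <= t ->
  m i t = m i 0 + \int[lebesgue_measure]_(s in `[0, t]) (gg i s - Dd i * m i s).
Proof.
move=> t0.
rewrite {1}/m (Hweak i t (@id R) t0 C1_id) {1}/m H0.
congr (_ + _); apply: eq_Rintegral => s; rewrite inE /= in_itv /= => /andP[s0 _].
rewrite (integI_ext _ _ (fun w => beta i s + (- F i) * w + 0 * w ^+ 2)); last first.
  by move=> w; rewrite derive1_id /beta /F /f0 /m; ring.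
rewrite integI_quad; last exact: Hsupp.
rewrite beta_split FDd -/(m i s); ring.
Qed.

Lemma M2_eq i t : 0 <= t ->
  M2 i t = M2 i 0 + \int[lebesgue_measure]_(s in `[0, t]) (2 * beta i s * m i s - (2 * F i) * M2 i s).
Proof.
move=> t0.
rewrite {1}/M2 (Hweak i t _ t0 C1_sq) {1}/M2 H0.
congr (_ + _); apply: eq_Rintegral => s; rewrite inE /= in_itv /= => /andP[s0 _].
rewrite (integI_ext _ _ (fun w => 0 + (2 * beta i s) * w + (- (2 * F i)) * w ^+ 2)); last first.
  by move=> w; rewrite d_sq /beta /F /f0 /m; ring.
rewrite integI_quad; last exact: Hsupp.
rewrite -/(m i s) -/(M2 i s); ring.
Qed.

Lemma m_cont j : {within `[0, +oo[, continuous (m j)}.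
Proof. exact (Hcont j _ (CIfun_cont cid)). Qed.

Lemma M2_cont j : {within `[0, +oo[, continuous (M2 j)}.
Proof. exact (Hcont j _ (CIfun_cont cont_sq)). Qed.

Lemma gg_cont i : {within `[0, +oo[, continuous (gg i)}.
Proof.
move=> t; rewrite /gg; apply: cvgD; first exact: cvg_cst.
apply: cvgM; first exact: cvg_cst.
apply: (@cvg_bigsum _ _ (nbhs t) _ _ _ _ (fun (j : 'I_n.+1) t => fNS j * m j t)) => j _.
by apply: cvgM; [exact: cvg_cst|exact: m_cont].
Qed.

Lemma beta_cont i : {within `[0, +oo[, continuous (beta i)}.
Proof.
move=> t; rewrite /beta; apply: cvgD; first exact: cvg_cst.
apply: cvgM; first exact: cvg_cst.
apply: (@cvg_bigsum _ _ (nbhs t) _ _ _ _ (fun (j : 'I_n.+1) t => fNS j * m j t)) => j _.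
by apply: cvgM; [exact: cvg_cst|exact: m_cont].
Qed.

Lemma gg_cvg (i : 'I_n.+1) : (forall j : 'I_n.+1, (i < j)%N -> m j t @[t --> +oo] --> mi j) ->
  gg i t @[t --> +oo] --> G i.
Proof.
move=> H; rewrite /gg /G; apply: cvgD; first exact: cvg_cst.
apply: cvgM; first exact: cvg_cst.
apply: (@cvg_bigsum _ _ _ _ _ _ _ (fun (j : 'I_n.+1) t => fNS j * m j t)) => j ij.
by apply: cvgM; [exact: cvg_cst|exact: H].
Qed.

Lemma step (i : 'I_n.+1) : (forall j : 'I_n.+1, (i < j)%N -> m j t @[t --> +oo] --> mi j) ->
  m i t @[t --> +oo] --> mi i.
Proof.
move=> H.
have [D0|Dn0] := eqVneq (Dd i) 0.
  have [iN|iN] := eqVneq i ord_max; last by have := Dd_gt0 _ iN; rewrite D0 ltxx.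
  subst i.
  have h : alpha * fS ord_max = 0.
    by move: D0; rewrite /Dd tail_max stail_max mulr0 addr0.
  have gg0 : forall s, gg ord_max s = 0.
    by move=> s; rewrite /gg tail_max stail_max mulr0 addr0 mulrA h mul0r.
  have mc : forall t, 0 <= t -> m ord_max t = mi ord_max.
    move=> t t0; rewrite m_eq //.
    rewrite (@eq_Rintegral _ _ _ _ _ (fun _ => 0)); last by move=> s _; rewrite gg0 D0 mul0r subr0.
    rewrite /Rintegral integral0 /= addr0.
    rewrite /mi minf_fix /minf_step eqxx /minf_last h eqxx.
    by rewrite /m H0.
  apply/cvgrPdist_le => e e0; exists 0; split; first exact: num_real.
  by move=> t /ltW t0; rewrite mc // subrr normr0 ltW.
have Dp : 0 < Dd i by rewrite lt_neqAle eq_sym Dn0 Dd_ge0.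
have := ode_cvg (m i) (gg i) (Dd i) (G i) Dp (m_cont i) (gg_cont i) (m_eq i) (gg_cvg _ H).
suff -> : G i / Dd i = mi i by [].
by rewrite -DG mulrAC divff ?mul1r // lt0r_neq0.
Qed.

Lemma m_cvg_k k : forall i : 'I_n.+1, (n - i <= k)%N -> m i t @[t --> +oo] --> mi i.
Proof.
elim: k => [|k IH] i Hi; apply: step => j ij.
  by have := ltn_ord j; lia.
by apply: IH; have := ltn_ord j; lia.
Qed.

Lemma m_cvg i : m i t @[t --> +oo] --> mi i.
Proof. exact: (m_cvg_k (n - i) i (leqnn _)). Qed.

Lemma beta_cvg i : beta i t @[t --> +oo] --> F i * mi i.
Proof.
have -> : beta i = (fun t => gg i t + (1 - alpha) * fNS i * m i t).
  by apply/funext => t; rewrite beta_split.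
have -> : F i * mi i = G i + (1 - alpha) * fNS i * mi i by rewrite FDd -DG; ring.
apply: cvgD; first by apply: gg_cvg => j _; exact: m_cvg.
by apply: cvgM; [exact: cvg_cst|exact: m_cvg].
Qed.

Lemma M2_cvg i : M2 i t @[t --> +oo] --> mi i ^+ 2.
Proof.
have F0 := F_gt0 i.
have p : 0 < 2 * F i by rewrite mulr_gt0.
have cg : {within `[0, +oo[, continuous (fun s => 2 * beta i s * m i s)}.
  move=> t; apply: cvgM; last exact: m_cont.
  by apply: cvgM; [exact: cvg_cst|exact: beta_cont].
have lg : (fun s => 2 * beta i s * m i s) t @[t --> +oo] --> 2 * (F i * mi i) * mi i.
  apply: cvgM; last exact: m_cvg.
  by apply: cvgM; [exact: cvg_cst|exact: beta_cvg].
have := ode_cvg (M2 i) _ (2 * F i) _ p (M2_cont i) cg (M2_eq i) lg.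
suff -> : 2 * (F i * mi i) * mi i / (2 * F i) = mi i ^+ 2 by [].
by field; rewrite lt0r_neq0.
Qed.

Lemma final_cvg i phi : CIfun phi ->
  integI (fNSt i t) phi @[t --> +oo] --> phi (mi i).
Proof. by move=> cphi; apply: weak_conv => //; [exact: Hsupp|exact: m_cvg|exact: M2_cvg]. Qed.

Lemma part2 : (forall i : 'I_n.+1, i != ord_max -> alpha * fS i = 0) ->
  forall i, mi i = mi ord_max.
Proof.
move=> hS.
have hmN : alpha * fS ord_max * mi ord_max = alpha * fS ord_max * mS ord_max.
  rewrite {1}/mi minf_fix /minf_step eqxx /minf_last.
  by case: ifP => [/eqP ->|_]; rewrite ?mul0r.
suff H : forall k (i : 'I_n.+1), (n - i <= k)%N -> mi i = mi ord_max.
  by move=> i; exact: (H (n - i)%N i (leqnn _)).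
elim=> [|k IH] i Hi.
  have -> : i = ord_max by apply/val_inj => /=; have := ltn_ord i; lia.
  by [].
have [->//|iN] := eqVneq i ord_max.
have IHj : forall j : 'I_n.+1, (i < j)%N -> mi j = mi ord_max.
  by move=> j ij; apply: IH; have := ltn_ord j; lia.
have tS : alpha * tail (fun j => fS j * mS j) i = alpha * fS ord_max * mS ord_max.
  rewrite /tail mulr_sumr (bigD1 ord_max) /= ?le_max_ord // big1 ?addr0 ?mulrA //.
  by move=> j /andP[_ jN]; rewrite mulrA hS // mul0r.
have tS2 : alpha * tail fS i = alpha * fS ord_max.
  rewrite /tail mulr_sumr (bigD1 ord_max) /= ?le_max_ord // big1 ?addr0 //.
  by move=> j /andP[_ jN]; rewrite hS.
have sN : stail (fun j => fNS j * mi j) i = stail fNS i * mi ord_max.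
  by rewrite /stail mulr_suml; apply: eq_bigr => j ij; rewrite IHj.
apply: (mulfI (lt0r_neq0 (Dd_gt0 _ iN))).
rewrite DG /G /Dd tS sN tS2 -hmN; ring.
Qed.

End Main.

Theorem theorem4p4 (R : realType) (n : nat) (alpha : R)
  (h : 'I_n.+1 -> R) (fS fNS : 'I_n.+1 -> R) (mS : 'I_n.+1 -> R)
  (f0NS : 'I_n.+1 -> probability R R)
  (fNSt : 'I_n.+1 -> R -> probability R R) :
  0 <= alpha <= 1 ->
  0 <= h ord0 -> h ord_max <= 1 ->
  (forall i j : 'I_n.+1, (i < j)%N -> h i < h j) ->
  (forall j, 0 <= fS j) -> (forall j, 0 <= fNS j) ->
  \sum_(j < n.+1) fS j = 1 -> \sum_(j < n.+1) fNS j = 1 ->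
  0 < alpha * fS ord_max + (1 - alpha) * fNS ord_max ->
  (forall j, -1 <= mS j <= 1) ->
  (forall i, supported_in_I (f0NS i)) ->
  (forall i t, 0 <= t -> supported_in_I (fNSt i t)) ->
  (forall i, fNSt i 0 = f0NS i) ->
  (* continuity of t |-> f^{NS,i}(t) for the weak topology of P([-1,1]) *)
  (forall i phi, CIfun phi ->
     {within `[0, +oo[%classic, continuous (fun t => integI (fNSt i t) phi)}) ->
  (* weak formulation of the equation *)
  (let f0 := fun j => alpha * fS j + (1 - alpha) * fNS j in
   let mNS := fun j t => integI (fNSt j t) id in
   let beta := fun i t =>
     alpha * tail (fun j => fS j * mS j) i
     + (1 - alpha) * tail (fun j => fNS j * mNS j t) i in
   forall i t phi, 0 <= t -> C1fun phi ->
     integI (fNSt i t) phi =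
     integI (f0NS i) phi
     + Rintegral lebesgue_measure `[0, t]%classic
         (fun s => integI (fNSt i s)
                     (fun w => derive1 phi w * (beta i s - tail f0 i * w)))) ->
  let m := minf alpha fS fNS mS (integI (f0NS ord_max) id) in
  (forall i phi, CIfun phi ->
     (fun t => integI (fNSt i t) phi) x @[x --> +oo] --> phi (m i))
  /\
  ((forall i : 'I_n.+1, i != ord_max -> alpha * fS i = 0) ->
     forall i, m i = m ord_max).
Proof.
move=> Ha h0 h1 hinc HfS HfNS sS sNS Hpos HmS Hsupp0 Hsupp H0 Hcont Hweak m.
split.
  by move=> i phi cphi; apply: final_cvg.
by apply: part2.
Qed.
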